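(* Let $f_0:\mathbb{R}^d\to[0,\infty)$ be a probability density, $\lambda>0$, $\bar\epsilon>0$, and assume: for any $\lambda_l<\lambda_h$ in $[\lambda-\bar\epsilon,\lambda+\bar\epsilon]$ and $x,y\in S_{\lambda_h}$, (1) if $x,y$ are disconnected in $S_{\lambda_h}$ then they are disconnected in $S_{\lambda_l}$, and (2) if $x,y$ are connected in $S_{\lambda_l}$ then they are connected in $S_{\lambda_h}$. Let $\mathcal{X}_n$ be a finite subset of $\mathbb{R}^d$, $f:\mathbb{R}^d\to\mathbb{R}$, $\delta>0$, $\eta>0$, and suppose $\epsilon:=\|f-f_0\|_\infty+\eta\le\bar\epsilon$ and $S_{\lambda+\epsilon}\subseteq\hat S_{\delta,\lambda}(f)\subseteq S_{\lambda-\epsilon}$. Then whenever $T(x,y)\ne\hat T(x,y)$ for some $x,y\in\mathbb{R}^d$, we have $\{x,y\}\cap\big(S_{\lambda-\epsilon}\setminus S_{\lambda+\epsilon}\big)\ne\emptyset$.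
   Context: $S_t=\{x:f_0(x)\ge t\}$; ''connected in $S$'' means lying in the same topological connected component of $S$. $\hat S_{\delta,\lambda}(f)=\bigcup_{x\in\mathcal{X}_n,\,f(x)\ge\lambda}B(x,\delta/2)$ with $B$ the open Euclidean ball. The co-clustering relation $T:\mathbb{R}^d\times\mathbb{R}^d\to\{0,1\}$ has $T(x,y)=1$ if $x,y$ both lie outside $S_\lambda$ or lie in the same connected component of $S_\lambda$, and $T(x,y)=0$ otherwise; $\hat T$ is defined the same way with $S_\lambda$ replaced by $\hat S_{\delta,\lambda}(f)$. *)

(* Defs.v *)
From HB Require Import structures.
From mathcomp Require Import all_boot all_order all_algebra.
From mathcomp Require Import all_classical all_reals all_analysis.
Set Implicit Arguments. Unset Strict Implicit. Unset Printing Implicit Defensive.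
Import Order.TTheory GRing.Theory Num.Theory.
Import numFieldNormedType.Exports.
Local Open Scope classical_set_scope.
Local Open Scope ring_scope.

Section Defs.
Variables (R : realType) (d : nat).

Definition lvl (f0 : 'rV[R]_d -> R) (t : R) : set 'rV[R]_d :=
  [set x | t <= f0 x].

Definition conn_in (S : set 'rV[R]_d) (x y : 'rV[R]_d) : Prop :=
  connected_component S x y.

Definition eball (x : 'rV[R]_d) (r : R) : set 'rV[R]_d :=
  [set y | Num.sqrt (\sum_(i < d) (x ord0 i - y ord0 i) ^+ 2) < r].

Definition Shat (Xn : set 'rV[R]_d) (f : 'rV[R]_d -> R) (delta lam : R)
  : set 'rV[R]_d :=
  \bigcup_(x in [set x | Xn x /\ lam <= f x]) eball x (delta / 2).

(* co-clustering relation T_S(x,y) = 1 *)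
Definition cocluster (S : set 'rV[R]_d) (x y : 'rV[R]_d) : Prop :=
  (~ S x /\ ~ S y) \/ conn_in S x y.

Definition supdist (f f0 : 'rV[R]_d -> R) : \bar R :=
  ereal_sup [set (`|f x - f0 x|)%:E | x in [set: 'rV[R]_d]].

End Defs.

(* Main.v *)
Require Import Defs.
From HB Require Import structures.
From mathcomp Require Import all_boot all_order all_algebra.
From mathcomp Require Import all_classical all_reals all_analysis.
Import Order.TTheory GRing.Theory Num.Theory.
Import numFieldNormedType.Exports.
Local Open Scope classical_set_scope.
Local Open Scope ring_scope.


Lemma cc_mono {R : realType} {d : nat} {A B : set 'rV[R]_d} {x y} :
  A `<=` B -> conn_in A x y -> conn_in B x y.
Proof. by move=> AB [C [Cx CA Cc] Cy]; exists C => //; split => //; apply: subset_trans AB. Qed.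

Lemma cc_memx {R : realType} {d : nat} {A : set 'rV[R]_d} {x y} :
  conn_in A x y -> A x.
Proof. by move=> [C [Cx CA Cc] Cy]; apply: CA. Qed.

Lemma cc_memy {R : realType} {d : nat} {A : set 'rV[R]_d} {x y} :
  conn_in A x y -> A y.
Proof. by move=> h; apply: (connected_component_sub h). Qed.

Theorem lemmaS6 (R : realType) (d : nat) (f0 : 'rV[R]_d -> R)
  (lam epsbar : R)
  (hf0 : forall x, 0 <= f0 x)
  (hlam : 0 < lam) (hepsbar : 0 < epsbar)
  (hstab : forall lam_l lam_h : R,
      lam - epsbar <= lam_l -> lam_l < lam_h -> lam_h <= lam + epsbar ->
      forall x y, lvl f0 lam_h x -> lvl f0 lam_h y ->
        (~ conn_in (lvl f0 lam_h) x y -> ~ conn_in (lvl f0 lam_l) x y) /\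
        (conn_in (lvl f0 lam_l) x y -> conn_in (lvl f0 lam_h) x y))
  (Xn : set 'rV[R]_d) (hXn : finite_set Xn)
  (f : 'rV[R]_d -> R) (delta eta eps : R)
  (hdelta : 0 < delta) (heta : 0 < eta)
  (heps : (supdist f f0 + eta%:E)%E = eps%:E)
  (hepsle : eps <= epsbar)
  (hsub1 : lvl f0 (lam + eps) `<=` Shat Xn f delta lam)
  (hsub2 : Shat Xn f delta lam `<=` lvl f0 (lam - eps)) :
  forall x y : 'rV[R]_d,
    ~ (cocluster (lvl f0 lam) x y <-> cocluster (Shat Xn f delta lam) x y) ->
    [set x; y] `&` (lvl f0 (lam - eps) `\` lvl f0 (lam + eps)) !=set0.
Proof.
Proof.
have eps_gt0 : 0 < eps.
  have h0 : (0 <= supdist f f0)%E.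
    apply: le_trans (ereal_sup_ubound _); last by exists 0 => //.
    by rewrite lee_fin.
  move: heps; case E: (supdist f f0) h0 => [r| |] //= h0.
  by case=> <-; rewrite lee_fin in h0; apply: ltr_pwDr.
have Hl1 : lvl f0 (lam + eps) `<=` lvl f0 lam.
  by move=> z; rewrite /lvl /=; apply: le_trans; rewrite lerDl ltW.
have Hl2 : lvl f0 lam `<=` lvl f0 (lam - eps).
  by move=> z; rewrite /lvl /=; apply: le_trans; rewrite lerBlDr lerDl ltW.
move=> x y Hneq.
apply: contrapT => Hne.
have cls : forall z, z = x \/ z = y ->
    lvl f0 (lam + eps) z \/ ~ lvl f0 (lam - eps) z.
  move=> z hz; case: (pselect (lvl f0 (lam + eps) z)) => [|hn]; first by left.
  right => hm; apply: Hne; exists z; split; first by case: hz => ->; [left|right].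
  by split.
apply: Hneq.
case: (cls x (or_introl erefl)) => hx; case: (cls y (or_intror erefl)) => hy.
- have a1 : lam - epsbar <= lam - eps by rewrite lerD2l lerN2.
  have a2 : lam - eps < lam + eps by rewrite ltrBlDr -addrA ltrDl addr_gt0.
  have a3 : lam + eps <= lam + epsbar by rewrite lerD2l.
  have [_ st] := hstab (lam - eps) (lam + eps) a1 a2 a3 x y hx hy.
  rewrite /cocluster; split => -[[nx _]|c].
  + by exfalso; apply: nx; apply: Hl1.
  + right; apply: (cc_mono hsub1); apply: st; apply: (cc_mono Hl2) c.
  + by exfalso; apply: nx; apply: hsub1.
  + right; apply: (cc_mono Hl1); apply: st; apply: (cc_mono hsub2) c.
- rewrite /cocluster; split => -[[nx ny]|c].
  + by exfalso; apply: nx; apply: Hl1.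
  + by exfalso; apply: hy; apply: Hl2; apply: (cc_memy c).
  + by exfalso; apply: nx; apply: hsub1.
  + by exfalso; apply: hy; apply: hsub2; apply: (cc_memy c).
- rewrite /cocluster; split => -[[nx ny]|c].
  + by exfalso; apply: ny; apply: Hl1.
  + by exfalso; apply: hx; apply: Hl2; apply: (cc_memx c).
  + by exfalso; apply: ny; apply: hsub1.
  + by exfalso; apply: hx; apply: hsub2; apply: (cc_memx c).
- rewrite /cocluster; split => _; left; split.
  + by move=> h; apply: hx; apply: hsub2.
  + by move=> h; apply: hy; apply: hsub2.
  + by move=> h; apply: hx; apply: Hl2.
  + by move=> h; apply: hy; apply: Hl2.
Qed.
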